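(* Let $\Sigma$ be a complete fan in $N_{\mathbb R}\cong\mathbb R^2$ and $\mathbb L$ a combinatorially indecomposable tropical Lagrangian multi-section of rank $r$ over $\Sigma$. If $\mathbb L$ is unobstructed, with local system $\mathcal L$ on $L\setminus S'$ and consistent collection $\Theta$, then $\mathcal L$ is (up to isomorphism) the unique $\mathbb C^\times$-local system on $L\setminus S'$ whose monodromy around the unique ramification point of $\pi:L\to N_{\mathbb R}$ is $(-1)^{r+1}$.
   Context: $N$ lattice of rank $2$, $M=\mathrm{Hom}(N,\mathbb Z)$, $\Sigma(k)$ the $k$-dimensional cones, $\sigma^\vee$ dual cones, $U(\sigma)=\mathrm{Spec}\,\mathbb C[\sigma^\vee\cap M]$, $z^m$ monomials. $\mathbb L=(L,\Sigma_L,\mu,\pi,\varphi)$: a cone complex $L$ (finite union of closed rational polyhedral cones glued along faces), weights $\mu$, a branched covering $\pi$ onto $(N_{\mathbb R},\Sigma)$ mapping cones homeomorphically onto cones with weighted fibre count $r$, and $\varphi$ continuous, integral linear on cones; $m(\sigma')\in M$ its slope on a maximal cone; $\sigma^{(1)},\dots,\sigma^{(r)}$ the lifts of $\sigma\in\Sigma(2)$ with multiplicity. Combinatorial indecomposability (not combinatorially equivalent to a combinatorial union of two connected ones) gives: $L$ connected, separable (distinct lifts of a ray carry distinct restrictions of $\varphi$), and ramification locus $S'=L^{(0)}=\pi^{-1}(0)$ a single point. For adjacent $\sigma_1,\sigma_2\in\Sigma(2)$ (sharing a ray), each lift $\sigma_1^{(\alpha)}$ determines a unique lift $\sigma_2^{(\beta)}$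 sharing a ray with it. A $\mathbb C^\times$-local system $\mathcal L$ on $L\setminus S'$ is represented by constants $g^{sf}_{\sigma_1^{(\alpha)}\sigma_2^{(\beta)}}\in\mathbb C^\times$ on adjacent pairs of lifts. $\mathcal E_\sigma$: trivial rank $r$ bundle on $U(\sigma)$ with frame $1(\sigma^{(\alpha)})$ of torus weight $m(\sigma^{(\alpha)})$. $G^{sf}_{\sigma_1\sigma_2}:1(\sigma_1^{(\alpha)})\mapsto g^{sf}_{\sigma_1^{(\alpha)}\sigma_2^{(\beta)}}z^{m(\sigma_1^{(\alpha)})-m(\sigma_2^{(\beta)})}1(\sigma_2^{(\beta)})$. For $\tau=\sigma_1\cap\sigma_2\in\Sigma(1)$ and a cone $\omega'$ of $L$, $N_\tau(\omega')$ is the endomorphism of $\mathcal E_{\sigma_1}|_{U(\tau)}$ with $(\alpha,\beta)$-entry $n^{(\alpha\beta)}_\tau(\omega')z^{m(\sigma_1^{(\alpha)})-m(\sigma_1^{(\beta)})}$ ($n$'s complex constants) if $\omega'\subset\sigma_1^{(\alpha)}\cap\sigma_1^{(\beta)}$, $\alpha\ne\beta$, $m(\sigma_1^{(\alpha)})-m(\sigma_1^{(\beta)})\in\tau^\vee\cap M$, and $0$ otherwise; $\Theta_{\sigma_1\sigma_2}=\prod_{\omega'\in S'_\tau}\exp N_\tau(\omega')$ with $S'_\tau=\{\sigma_1^{(\alpha)}\cap\sigma_1^{(\beta)}:m(\sigma_1^{(\alpha)})-m(\sigma_1^{(\beta)})\in\tau^\vee\cap M\}$; $G_{\sigma_1\sigma_2}=G^{sf}_{\sigma_1\sigma_2}\circ\Theta_{\sigma_1\sigma_2}$.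 $\Theta$ is consistent if for every $\omega\in\Sigma$ and every cycle $\sigma_1,\dots,\sigma_{l+1}=\sigma_1$ of maximal cones containing $\omega$ with consecutive ones sharing a ray, $G_{\sigma_l\sigma_{l+1}}|_{U(\omega)}\circ\cdots\circ G_{\sigma_1\sigma_2}|_{U(\omega)}=\mathrm{Id}$. $\mathbb L$ is unobstructed if there exist $\mathcal L$ and a consistent $\Theta$. *)

(* Defs.v *)
From HB Require Import structures.
From mathcomp Require Import all_boot all_order all_algebra all_fingroup.
From mathcomp Require Import all_classical all_reals all_analysis.
From mathcomp Require Import complex.
Set Implicit Arguments. Unset Strict Implicit. Unset Printing Implicit Defensive.
Import Order.TTheory GRing.Theory Num.Theory ComplexField.
Import numFieldTopology.Exports numFieldNormedType.Exports.
Local Open Scope classical_set_scope.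
Local Open Scope ring_scope.

HB.instance Definition _ (R : rcfType) :=
  PseudoPointedMetric.copy R[i] (R[i] : numClosedFieldType)^o.

Definition Z2 := (int * int)%type.
Definition dotZ (u w : Z2) : int := u.1 * w.1 + u.2 * w.2.
Definition detZ (u w : Z2) : int := u.1 * w.2 - u.2 * w.1.
Definition subZ (u w : Z2) : Z2 := (u.1 - w.1, u.2 - w.2).

(* A complete fan is encoded by its rays v_0, ..., v_{n-1} in              *)
(* counterclockwise order; the maximal cones are                           *)
(* sigma_i = cone(v_i, v_{i+1})  (indices mod n, successor = ordS).        *)
(* Conditions: each sigma_i is strictly convex and 2-dimensional          *)
(* (det(v_i,v_{i+1}) > 0), and the half-open cones [v_i, v_{i+1}) cover   *)
(* every nonzero lattice point exactly once (i.e. the cones form a fan    *)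
(* whose support is all of N_R).                                          *)
Definition in_halfopen_cone n (v : 'I_n -> Z2) (i : 'I_n) (x : Z2) : bool :=
  (0 < detZ x (v (ordS i))) && (0 <= detZ (v i) x).

Definition complete_fan n (v : 'I_n -> Z2) : Prop :=
  (forall i : 'I_n, 0 < detZ (v i) (v (ordS i))) /\
  (forall x : Z2, x != (0, 0) -> #|[set i | in_halfopen_cone v i x]| = 1%N).

(* Tropical Lagrangian multi-sections of rank r over such a fan, in the  *)
(* combinatorially indecomposable situation (weights 1, ramification     *)
(* locus S' = L^(0) = pi^{-1}(0) a single point).           *)
(*  - lifts of sigma_i : sigma_i^(a), a : 'I_r                            *)
(*  - p i : the bijection sigma_i^(a) shares a ray (a lift of v_{i+1})     *)
(*          with sigma_{i+1}^(p i a)                                      *)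
(*  - m i a : the slope m(sigma_i^(a)) in M of phi on sigma_i^(a)         *)
Definition step n r (p : 'I_n -> {perm 'I_r}) (s : 'I_n * 'I_r) : 'I_n * 'I_r :=
  (ordS s.1, p s.1 s.2).

(* phi is continuous: slopes agree on the common ray lift *)
Definition phi_continuous n r (v : 'I_n -> Z2) (p : 'I_n -> {perm 'I_r})
  (m : 'I_n -> 'I_r -> Z2) : Prop :=
  forall i a, dotZ (m i a) (v (ordS i)) = dotZ (m (ordS i) (p i a)) (v (ordS i)).

(* separability: distinct lifts of the ray v_{i+1} (indexed by the lift    *)
(* of sigma_i they bound) carry distinct restrictions of phi               *)
Definition separable n r (v : 'I_n -> Z2) (m : 'I_n -> 'I_r -> Z2) : Prop :=
  forall i : 'I_n, injective (fun a => dotZ (m i a) (v (ordS i))).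

(* L \ S' is connected: the lifts of maximal cones glued along ray lifts   *)
(* form a single chain                                                      *)
Definition punctured_connected n r (p : 'I_n -> {perm 'I_r}) : Prop :=
  forall s s' : 'I_n * 'I_r, exists k, iter k (step p) s = s'.

(* Faces of the cone complex L: the apex (= S'), the ray lifts and the    *)
(* lifts of maximal cones.                                                  *)
(*   None               : the apex                                        *)
(*   Some (false,(i,a)) : the lift of v_{i+1} which is the common ray of  *)
(*                        sigma_i^(a) and sigma_{i+1}^(p i a)             *)
(*   Some (true,(i,a))  : sigma_i^(a)                                     *)
Definition Lface n r := option (bool * ('I_n * 'I_r)).

Definition face_of n r (p : 'I_n -> {perm 'I_r}) (f : Lface n r) (i : 'I_n) (a : 'I_r) : bool :=
  match f with
  | None => true
  | Some (false, (j, b)) => ((j == i) && (b == a)) || ((ordS j == i) && (p j b == a))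
  | Some (true, (j, b)) => (j == i) && (b == a)
  end.

Definition face_le n r (p : 'I_n -> {perm 'I_r}) (f f' : Lface n r) : bool :=
  match f' with
  | None => f == None
  | Some (false, _) => (f == None) || (f == f')
  | Some (true, (i, a)) => face_of p f i a
  end.

Definition is_meet n r (p : 'I_n -> {perm 'I_r}) (f : Lface n r) (i : 'I_n) (a b : 'I_r) : bool :=
  [&& face_of p f i a, face_of p f i b &
      [forall f' : Lface n r, (face_of p f' i a && face_of p f' i b) ==> face_le p f' f]].

(*   Sface: None = {0}, Some (false, j) = ray v_j, Some (true, i) = sigma_i *)
(*   a move (i, true)  is the ordered pair (sigma_i, sigma_{i+1})          *)
(*   a move (i, false) is the ordered pair (sigma_{i+1}, sigma_i)          *)
(*   in both cases tau = sigma_i \cap sigma_{i+1} = ray v_{i+1}.           *)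
Definition Sface n := option (bool * 'I_n).

Definition cone_contains n (i : 'I_n) (w : Sface n) : bool :=
  match w with
  | None => true
  | Some (false, j) => (j == i) || (j == ordS i)
  | Some (true, j) => j == i
  end.

Definition move n := ('I_n * bool)%type.
Definition msrc n (mv : move n) : 'I_n := if mv.2 then mv.1 else ordS mv.1.
Definition mtgt n (mv : move n) : 'I_n := if mv.2 then ordS mv.1 else mv.1.
Definition mtau n (mv : move n) : 'I_n := ordS mv.1.
Definition chains n (mv mv' : move n) : bool := mtgt mv == msrc mv'.

Section Sheaves.
Variable R : realType.
Local Notation C := R[i].

Definition zmon (t : C * C) (u : Z2) : C := t.1 ^ u.1 * t.2 ^ u.2.

Definition expm r (A : 'M[C]_r) : 'M[C]_r :=
  \matrix_(a, b) lim ((fun N : nat => (\sum_(k < N) (k`!%:R)^-1 *: A ^+ k) a b) @ \oo).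

Variables (n r : nat) (v : 'I_n -> Z2) (p : 'I_n -> {perm 'I_r})
  (m : 'I_n -> 'I_r -> Z2).

(* A C^x-local system on L \ S': constants g i a attached to the adjacent *)
(* pair (sigma_i^(a), sigma_{i+1}^(p i a)); the constant of the reversed   *)
(* pair is the inverse.                                                    *)
Definition local_system (g : 'I_n -> 'I_r -> C) : Prop := forall i a, g i a != 0.

(* Matrices below use the row-vector convention: row a of the matrix of a *)
(* morphism E_{sigma} -> E_{sigma'} is the image of the frame 1(sigma^(a)),*)
(* and composition first-A-then-B is   A *m B.  All sections are           *)
(* evaluated at points t of the dense torus (C^x)^2 \subset U(omega).     *)

Definition Gsf (g : 'I_n -> 'I_r -> C) (mv : move n) (t : C * C) : 'M[C]_r :=
  \matrix_(a, b)
    if mv.2 then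
      (if b == p mv.1 a then g mv.1 a * zmon t (subZ (m mv.1 a) (m (ordS mv.1) b)) else 0)
    else
      (if a == p mv.1 b then (g mv.1 b)^-1 * zmon t (subZ (m (ordS mv.1) a) (m mv.1 b))
       else 0).

Definition Nmat (nc : move n -> Lface n r -> 'I_r -> 'I_r -> C) (mv : move n)
  (f : Lface n r) (t : C * C) : 'M[C]_r :=
  \matrix_(a, b)
    if [&& a != b, face_of p f (msrc mv) a, face_of p f (msrc mv) b &
          0 <= dotZ (subZ (m (msrc mv) a) (m (msrc mv) b)) (v (mtau mv))]
    then nc mv f a b * zmon t (subZ (m (msrc mv) a) (m (msrc mv) b))
    else 0.

Definition Sprime_tau (mv : move n) : {set Lface n r} :=
  [set f | [exists a, exists b,
     is_meet p f (msrc mv) a b &&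
     (0 <= dotZ (subZ (m (msrc mv) a) (m (msrc mv) b)) (v (mtau mv)))]].

Definition Theta nc (mv : move n) (t : C * C) : 'M[C]_r :=
  \big[mulmx/1%:M]_(f in Sprime_tau mv) expm (Nmat nc mv f t).

Definition Gmat g nc (mv : move n) (t : C * C) : 'M[C]_r :=
  Theta nc mv t *m Gsf g mv t.

Definition consistent g nc : Prop :=
  forall (w : Sface n) (c : seq (move n)),
    path.cycle (@chains n) c ->
    all (fun mv => cone_contains (msrc mv) w && cone_contains (mtgt mv) w) c ->
    forall t : C * C, t.1 != 0 -> t.2 != 0 ->
      \big[mulmx/1%:M]_(mv <- c) Gmat g nc mv t = 1%:M.

(* monodromy of the local system along the loop in L \ S' around the      *)
(* ramification point, starting from the lift s                           *)
Definition monodromy (g : 'I_n -> 'I_r -> C) (s : 'I_n * 'I_r) : C :=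
  \prod_(k < n * r) g (iter k (step p) s).1 (iter k (step p) s).2.

Definition iso_ls (g g' : 'I_n -> 'I_r -> C) : Prop :=
  exists h : 'I_n -> 'I_r -> C, (forall i a, h i a != 0) /\
    forall i a, g' i a = h (ordS i) (p i a) * g i a / h i a.

End Sheaves.

(* Main.v *)
Require Import Defs.
From HB Require Import structures.
From mathcomp Require Import all_boot all_order all_algebra all_fingroup.
From mathcomp Require Import all_classical all_reals all_analysis.
From mathcomp Require Import complex.
From mathcomp Require Import zify ring.
Import Order.TTheory GRing.Theory Num.Theory ComplexField.
Import numFieldTopology.Exports numFieldNormedType.Exports.
Local Open Scope classical_set_scope.
Local Open Scope ring_scope.

Lemma orbit_all (T : finType) (f : T -> T) (x : T) :
  (forall y, exists k, iter k f x = y) ->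
  fingraph.order f x = #|T| /\ perm_eq (fingraph.orbit f x) (index_enum T).
Proof.
move=> Hy.
have Hin : forall y, y \in fingraph.orbit f x.
  move=> y; rewrite -fconnect_orbit; have [k <-] := Hy y; exact: fconnect_iter.
have P1 : perm_eq (fingraph.orbit f x) (enum T).
  by apply: uniq_perm; [exact: orbit_uniq | exact: enum_uniq | move=> y; rewrite mem_enum Hin].
split; last first.
  by apply: uniq_perm; [exact: orbit_uniq | exact: index_enum_uniq | move=> y; rewrite mem_index_enum Hin].
by rewrite -size_orbit (perm_size P1) -cardE.
Qed.

Lemma ordS_iter n (i : 'I_n) k : val (iter k (@ordS n) i) = ((i + k) %% n)%N.
Proof.
elim: k => [|k IH] /=; first by rewrite addn0 modn_small.
by rewrite IH -addn1 modnDml -addnA addn1.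
Qed.

Lemma lim_ev (R : realType) (u : nat -> R[i]) (c : R[i]) N :
  (forall k, (N <= k)%N -> u k = c) -> lim (u @ \oo) = c.
Proof.
move=> H. apply: lim_near_cst.
 - exact: (@norm_hausdorff _ (R[i] : numClosedFieldType)^o).
 - near=> k. apply: H. near: k. by exists N.
Unshelve. all: by end_near.
Qed.

Lemma det_unitri (K : comPzRingType) r (M : 'M[K]_r) (rk : 'I_r -> nat) :
  (forall a, M a a = 1) ->
  (forall a b, a != b -> M a b != 0 -> (rk b < rk a)%N) ->
  \det M = 1.
Proof.
move=> Hd Ho; rewrite /determinant (bigD1 1%g) //= [X in _ + X]big1 => [|s Hs].
  rewrite odd_perm1 expr0 mul1r addr0; apply: big1 => i _; by rewrite perm1 Hd.
have [i Hi] : exists i, M i (s i) == 0.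
  apply/existsP; case: (boolP [exists x, M x (s x) == 0]) => // /existsPn Hall; exfalso.
  have Hle : forall j, (rk (s j) <= rk j)%N.
    move=> j; have [E|E] := eqVneq j (s j); first by rewrite -E.
    by apply: ltnW; apply: Ho => //; exact: Hall.
  have [j Hj] : exists j, s j != j.
    apply/existsP; case: (boolP [exists x, s x != x]) => // /existsPn Hj; exfalso; move/eqP: Hs => Hs; apply: Hs.
    by apply/permP => k; rewrite perm1; apply/eqP; move: (Hj k); rewrite negbK.
  have Hlt : (rk (s j) < rk j)%N by apply: Ho; [by rewrite eq_sym | exact: Hall].
  have Hsum : (\sum_k rk (s k) = \sum_k rk k)%N by rewrite [X in _ = X](reindex_inj (@perm_inj _ s)).
  move: Hsum; rewrite (bigD1 j) //= [X in _ = X](bigD1 j) //=.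
  have : (\sum_(k | k != j) rk (s k) <= \sum_(k | k != j) rk k)%N by apply: leq_sum.
  move=> Hle2 Heq; have := leq_add Hlt Hle2; by rewrite addSn Heq ltnn.
by rewrite (bigD1 i) //= (eqP Hi) mul0r mulr0.
Qed.

Lemma rank_key r (key : 'I_r -> int) : injective key ->
  exists rk : 'I_r -> nat, (forall a, rk a < r)%N /\
    (forall a b, key b < key a -> (rk b < rk a)%N).
Proof.
move=> Hk; exists (fun a => #|[pred c | key c < key a]|); split.
  move=> a; rewrite -[X in (_ < X)%N]card_ord; apply: proper_card; apply/properP; split.
    exact: subset_predT.
  exists a => //; first [by rewrite inE ltxx | by rewrite /= ltxx | idtac "FAIL"].
move=> a b Hab; apply: proper_card; apply/properP; split.
  by apply/fintype.subsetP => c; rewrite !inE => H; exact: lt_trans H Hab.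
by exists b; rewrite !inE ?ltxx.
Qed.

Lemma det_expm (R : realType) r (A : 'M[R[i]]_r) (rk : 'I_r -> nat) :
 (forall a, rk a < r)%N -> (forall a b, A a b != 0 -> (rk b < rk a)%N) ->
 \det (expm A) = 1.
Proof.
move=> Hr Ho.
have Pk : forall k a b, (A ^+ k) a b != 0 -> (rk b + k <= rk a)%N.
  elim=> [|k IH] a b.
    rewrite expr0 mxE; case: (eqVneq a b) => [->|Hab]; first by rewrite addn0.
    by rewrite mulr0n eqxx.
  rewrite exprSr -mulmxE mxE => H.
  have [j Hj] : exists j, (A ^+ k) a j * A j b != 0.
    apply/existsP; case: (boolP [exists j, (A ^+ k) a j * A j b != 0]) => // /existsPn Hall.
    exfalso; move/negP: H; apply; apply/eqP; apply: big1 => j _.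
    by move: (Hall j); rewrite negbK => /eqP.
  move: Hj; rewrite mulf_eq0 negb_or => /andP [H1 H2].
  have := IH a j H1; have := Ho j b H2; lia.
have Z : forall k, (r <= k)%N -> A ^+ k = 0.
  move=> k Hk; apply/matrixP => a b; rewrite [RHS]mxE.
  case H: ((A ^+ k) a b == 0); first exact/eqP.
  have := Pk k a b; rewrite H => /(_ isT); have := Hr a; lia.
pose S := \sum_(k < r) (k`!%:R)^-1 *: A ^+ k.
have HS : forall N, (r <= N)%N -> \sum_(k < N) (k`!%:R)^-1 *: A ^+ k = S.
  move=> N HN; rewrite -(subnKC HN); elim: (N - r)%N => [|d IH]; first by rewrite addn0.
  rewrite addnS big_ord_recr /= IH Z ?scaler0 ?addr0 //; lia.
have Hexp : expm A = S.
  apply/matrixP => a b; rewrite mxE; apply: (@lim_ev _ _ _ r) => k Hk.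
  by rewrite HS.
have Sab : forall a b, S a b = \sum_(k < r) (k`!%:R)^-1 * (A ^+ k) a b.
  by move=> a b; rewrite /S summxE; apply: eq_bigr => k _; rewrite mxE.
rewrite Hexp; apply: (@det_unitri _ _ _ rk).
  move=> a; have r0 : (0 < r)%N by apply: leq_ltn_trans (Hr a).
  rewrite Sab (bigD1 (Ordinal r0)) //= big1 ?addr0.
    by rewrite fact0 invr1 mul1r expr0 mxE eqxx.
  move=> k Hk; case H: ((A ^+ k) a a == 0); first by rewrite (eqP H) mulr0.
  have := Pk k a a; rewrite H => /(_ isT).
  have : (k : nat) != 0%N by move: Hk; apply: contra => /eqP E; apply/eqP/val_inj.
  move=> H1 H2; exfalso; lia.
move=> a b Hab; rewrite Sab => H.
have [k Hk] : exists k : 'I_r, (k`!%:R)^-1 * (A ^+ k) a b != 0.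
  apply/existsP; case: (boolP [exists k : 'I_r, (k`!%:R)^-1 * (A ^+ k) a b != 0]) => // /existsPn Hall.
  exfalso; move/negP: H; apply; apply/eqP; apply: big1 => j _.
  by move: (Hall j); rewrite negbK => /eqP.
move: Hk; rewrite mulf_eq0 negb_or => /andP [_ H2].
have := Pk k a b H2.
case: (posnP k) => Hk0.
  move: H2; rewrite Hk0 expr0 mxE (negbTE Hab) mulr0n eqxx //.
lia.
Qed.

Lemma traject_map (T : Type) (f : T -> T) (x : T) N :
  traject f x N = [seq iter k f x | k <- iota 0 N].
Proof.
apply: (@eq_from_nth _ x); first by rewrite size_traject size_map size_iota.
move=> k; rewrite size_traject => Hk.
by rewrite nth_traject // (nth_map 0%N) ?size_iota // nth_iota.
Qed.

Lemma step_iter n r (p : 'I_n -> {perm 'I_r}) (i0 : 'I_n) x j :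
  iter j (step p) (i0, x) =
  (iter j (@ordS n) i0, ((\prod_(i <- traject (@ordS n) i0 j) p i)%g) x).
Proof.
elim: j => [|j IH]; first by rewrite /= big_nil perm1.
by rewrite iterS IH trajectSr big_rcons /= permM.
Qed.

Lemma dot_sub (x y w : Z2) : dotZ (subZ x y) w = dotZ x w - dotZ y w.
Proof. rewrite /dotZ /subZ /=; ring. Qed.

Lemma key_inj n r (v : 'I_n -> Z2) (p : 'I_n -> {perm 'I_r}) (m : 'I_n -> 'I_r -> Z2) :
  phi_continuous v p m -> separable v m ->
  forall mv : move n, injective (fun a => dotZ (m (msrc mv) a) (v (mtau mv))).
Proof.
move=> Hcont Hsep [i [|]]; rewrite /msrc /mtau /=; first exact: Hsep.
move=> a1 a2 /= E; apply: (@perm_inj _ (p i)^-1); apply: (Hsep i) => /=.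
by rewrite !Hcont !permKV.
Qed.

Lemma Nmat_lt (R : realType) n r (v : 'I_n -> Z2) (p : 'I_n -> {perm 'I_r})
  (m : 'I_n -> 'I_r -> Z2) nc mv f (t : R[i] * R[i]) :
  phi_continuous v p m -> separable v m ->
  forall a b, Nmat v p m nc mv f t a b != 0 ->
   dotZ (m (msrc mv) b) (v (mtau mv)) < dotZ (m (msrc mv) a) (v (mtau mv)).
Proof.
move=> Hcont Hsep a b; rewrite mxE.
case: ifP => [/and4P [Hab _ _ H] _| _]; last by rewrite eqxx.
rewrite lt_neqAle -subr_ge0 -dot_sub H andbT.
apply/eqP => E; move/eqP: Hab; apply; symmetry; exact: (@key_inj _ _ _ _ _ Hcont Hsep mv _ _ E).
Qed.

Theorem lemma5p3 (R : realType) (n r : nat) (v : 'I_n -> Z2)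
  (p : 'I_n -> {perm 'I_r}) (m : 'I_n -> 'I_r -> Z2)
  (g : 'I_n -> 'I_r -> R[i])
  (nc : move n -> Lface n r -> 'I_r -> 'I_r -> R[i]) :
  complete_fan v ->
  (0 < r)%N ->
  phi_continuous v p m ->
  separable v m ->
  punctured_connected p ->
  local_system g ->
  consistent v p m g nc ->
  (forall s, monodromy p g s = (-1) ^+ r.+1) /\
  (forall g' : 'I_n -> 'I_r -> R[i], local_system g' ->
     (exists s, monodromy p g' s = (-1) ^+ r.+1) -> iso_ls p g g').
Proof.
move=> [Hdet Hcov] r0 Hcont Hsep Hconn Hg Hcons.
have n0 : (0 < n)%N.
  case: (posnP n) => // Hn0; exfalso.
  move: (Hcov (1, 0) isT) => H1.
  have H2 : (#|[set i | in_halfopen_cone v i ((1%R, 0%R) : Z2)]| <= #|'I_n|)%N := max_card _.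
  by move: H2; rewrite H1 card_ord Hn0.
pose i0 : 'I_n := Ordinal n0.
pose a0 : 'I_r := Ordinal r0.
have stepinj : injective (step p).
  move=> [i a] [j b] E.
  have E1 : ordS i = ordS j := f_equal fst E.
  have E2 : p i a = p j b := f_equal snd E.
  have E3 := ordS_inj E1; subst j; by rewrite (perm_inj E2).
have HallS : forall y, exists k, iter k (@ordS n) i0 = y.
  move=> y; exists y; apply/val_inj; by rewrite ordS_iter /= add0n modn_small.
have [ordN ordP] := @orbit_all _ _ _ HallS.
rewrite card_ord in ordN.
pose N := (n * r)%N.
have stepall : forall s, fingraph.order (step p) s = N /\
    perm_eq (fingraph.orbit (step p) s) (index_enum _).
  move=> s; have [H1 H2] := @orbit_all _ _ _ (Hconn s); split => //.
  by rewrite H1 card_prod !card_ord.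
have monoE : forall (h : 'I_n -> 'I_r -> R[i]) s,
    monodromy p h s = \prod_i \prod_a h i a.
  move=> h s; rewrite /monodromy.
  have [H1 H2] := stepall s.
  transitivity (\prod_(y <- fingraph.orbit (step p) s) h y.1 y.2).
    rewrite /fingraph.orbit H1 traject_map big_map.
    have -> : iota 0 N = index_iota 0 N by rewrite /index_iota subn0.
    by rewrite big_mkord.
  by rewrite (perm_big _ H2) pair_big.
pose e : R[i] := (-1) ^+ r.+1.
have part1 : forall s, monodromy p g s = e.
  pose c := map (fun i => (i, true)) (fingraph.orbit (@ordS n) i0).
  have Hc : path.cycle (@chains n) c.
    rewrite /c cycle_map; exact: (cycle_orbit (@ordS_inj n) i0).
  have Hal : all (fun mv => cone_contains (msrc mv) None && cone_contains (mtgt mv) None) c.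
    by apply/allP.
  have := Hcons None c Hc Hal (1, 1) (oner_neq0 _) (oner_neq0 _).
  move/(congr1 determinant); rewrite det1.
  rewrite (big_morph _ (@det_mulmx _ r) (@det1 _ r)) big_map.
  have HG : forall i, \det (Gmat v p m g nc (i, true) (1, 1)) = (-1) ^+ (p i) * \prod_a g i a.
    move=> i; rewrite /Gmat det_mulmx.
    have -> : \det (Theta v p m nc (i, true) (1, 1)) = 1.
      rewrite /Theta (big_morph _ (@det_mulmx _ r) (@det1 _ r)) big1 // => f _.
      have [rk [Hr Hrk]] := @rank_key _ _ (@key_inj _ _ _ _ _ Hcont Hsep (i, true)).
      apply: (@det_expm _ _ _ rk) => // a b H; apply: Hrk.
      exact: (@Nmat_lt _ _ _ _ _ _ _ _ _ _ Hcont Hsep _ _ H).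
    have -> : Gsf p m g (i, true) (1, 1) = diag_mx (\row_a g i a) *m perm_mx (p i).
      apply/matrixP => a b; rewrite mul_diag_mx !mxE /= /zmon /= !exp1rz mulr1.
      by rewrite eq_sym; case: eqP => _; rewrite ?mulr1 ?mulr0.
    rewrite mul1r det_mulmx det_diag det_perm mulrC; congr (_ * _).
    by apply: eq_bigr => a _; rewrite mxE.
  under eq_bigr do rewrite HG.
  rewrite big_split /= [X in _ * X = _](perm_big _ ordP).
  set q := (\prod_(i <- fingraph.orbit (@ordS n) i0) p i)%g.
  have Hsgn : \prod_(i <- fingraph.orbit (@ordS n) i0) (-1) ^+ odd_perm (p i) = (-1) ^+ odd_perm q :> R[i].
    rewrite /q; apply: esym; apply: (big_morph (fun s : {perm 'I_r} => (-1) ^+ odd_perm s : R[i])).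
      by move=> s t /=; rewrite odd_permM signr_addb.
    by rewrite odd_perm1.
  rewrite Hsgn.
  have Htr : traject (@ordS n) i0 n = fingraph.orbit (@ordS n) i0 by rewrite /fingraph.orbit ordN.
  have HiS : iter n (@ordS n) i0 = i0 by apply/val_inj; rewrite ordS_iter /= add0n modnn.
  have Hiter : forall j x, iter (j * n) (step p) (i0, x) = (i0, (q ^+ j)%g x).
    elim=> [|j IH] x; first by rewrite mul0n /= expg0 perm1.
    by rewrite mulSn iterD IH step_iter HiS Htr -/q expgSr permM.
  have Hpo : forall a, porbit q a = porbit q a0.
    move=> a; apply/eqP; rewrite eq_porbit_mem; apply/porbitP.
    have [k Hk] := Hconn (i0, a0) (i0, a).
    have Hk1 : (k %% n = 0)%N.
      have := f_equal fst Hk; rewrite step_iter /= => /(congr1 val).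
      by rewrite ordS_iter /= add0n.
    have Ek : k = (k %/ n * n)%N by rewrite divnK // /dvdn Hk1.
    exists (k %/ n)%N; move: Hk; rewrite [in iter _ _ _]Ek Hiter => -[] <-.
    by [].
  have Hcard : #|porbits q| = 1%N.
    have -> : porbits q = [set porbit q a0]%SET.
      apply/setP => X; rewrite inE; apply/imsetP/eqP => [[a _ ->]|->]; [exact: Hpo | by exists a0].
    by rewrite cards1.
  have Hq : (-1) ^+ odd_perm q = e :> R[i].
    by rewrite /odd_perm card_ord Hcard /= addbT -oddS signr_odd.
  rewrite Hq => He s; rewrite monoE.
  have ee : e * e = 1 by rewrite /e -exprMn mulrNN mulr1 expr1n.
  have := congr1 (fun z => e * z) He; rewrite /= mulr1 mulrA ee mul1r => ->.
  by [].
split => // g' Hg' [s Hs].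
pose u (y : 'I_n * 'I_r) := g' y.1 y.2 / g y.1 y.2.
have unz : forall y, u y != 0.
  by move=> y; rewrite /u mulf_neq0 ?invr_neq0 ?Hg ?Hg'.
pose H y := \prod_(j < findex (step p) s y) u (iter j (step p) s).
have Hnz : forall y, H y != 0 by move=> y; apply/prodf_neq0 => j _; exact: unz.
exists (fun i a => H (i, a)); split; first by move=> i a; exact: Hnz.
move=> i a.
have [H1 H2] := stepall s.
have Hc : fconnect (step p) s (i, a).
  have [k <-] := Hconn s (i, a); exact: fconnect_iter.
have Hk := iter_findex Hc.
have Hkl := findex_max Hc.
rewrite H1 in Hkl.
have Hall1 : \prod_(j < N) u (iter j (step p) s) = 1.
  rewrite /u prodf_div.
  have -> : \prod_(j < N) g' (iter j (step p) s).1 (iter j (step p) s).2 = e by exact: Hs.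
  have -> : \prod_(j < N) g (iter j (step p) s).1 (iter j (step p) s).2 = e by exact: part1.
  by rewrite divff // /e signr_eq0.
have gnz := Hg i a.
have g'nz := Hg' i a.
case: (ltnP (findex (step p) s (i, a)).+1 N) => Hk1.
  have Hf : findex (step p) s (ordS i, p i a) = (findex (step p) s (i, a)).+1.
    have -> : (ordS i, p i a) = iter (findex (step p) s (i, a)).+1 (step p) s by rewrite iterS Hk.
    by rewrite findex_iter // H1.
  have -> : H (ordS i, p i a) = H (i, a) * u (i, a).
    by rewrite /H Hf big_ord_recr /= Hk.
  have := Hnz (i, a); rewrite /u /=; move: (H (i, a)) => x xnz.
  by field; rewrite xnz gnz.
have Ek : (findex (step p) s (i, a)).+1 = N by apply/eqP; rewrite eqn_leq Hk1 Hkl.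
have Hs0 : (ordS i, p i a) = s.
  by rewrite -[RHS](iter_order stepinj s) H1 -Ek iterS Hk.
have -> : H (ordS i, p i a) = 1 by rewrite /H Hs0 findex0 big_ord0.
have Hx : H (i, a) * u (i, a) = 1.
  by rewrite -Hall1 -Ek big_ord_recr /= Hk.
move: Hx (Hnz (i, a)); rewrite /u /=; move: (H (i, a)) => x Hx xnz.
apply: (mulIf xnz) => /=; rewrite mul1r divfK //.
by rewrite -[RHS]mul1r -Hx -mulrA divfK // mulrC.
Qed.
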